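(* For each $n\in\mathbb{N}$ let $A_n\subseteq\mathcal{R}$ be L-measurable, and suppose $\lim_{N\to\infty}M\big(\bigcap_{n=1}^N A_n\big)$ exists in $\mathcal{R}$. Then $\bigcap_{n=1}^\infty A_n$ is L-measurable.
   Context: $\mathcal{R}$ denotes the Levi-Civita field: functions $x:\mathbb{Q}\to\mathbb{R}$ with left-finite support, with componentwise addition and formal power series multiplication, ordered by $x>0$ iff $x\ne0$ and $x[\min\operatorname{supp}x]>0$; it is a non-Archimedean ordered field extension of $\mathbb{R}$, Cauchy complete in the order topology, in which all limits and series are taken (a series $\sum a_n$ converges iff $a_n\to0$). An interval is a set $[a,b],[a,b),(a,b]$ or $(a,b)$ with $a<b$ in $\mathcal{R}$, of length $l=b-a$. A cover of $A\subseteq\mathcal{R}$ is a sequence of intervals $(S_n)_{n\ge1}$ with $A\subseteq\bigcup_n S_n$ and $\sum_n l(S_n)$ convergent in $\mathcal{R}$. $A$ is called outer measurable if the infimum $\inf\{\sum_n l(S_n): (S_n)\text{ a cover of }A\}$ exists in $\mathcal{R}$; this infimum is then called the outer measure $M_u(A)$. An outer measurable set $A\subseteq\mathcal{R}$ is L-measurable if for every outer measurable $B\subseteq\mathcal{R}$ both $A\cap B$ and $A^c\cap B$ (where $A^c=\mathcal{R}\setminus A$) are outer measurable and $M_u(B)=M_u(A\cap B)+M_u(A^c\cap B)$; then its L-measure is $M(A):=M_u(A)$. Finite intersections of L-measurable sets are L-measurable, so $M(\bigcap_{n=1}^N A_n)$ is defined. *)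

(* Defs.v *)
(* The Levi-Civita field over an arbitrary
   realType R (any model of the real numbers). *)
From HB Require Import structures.
From mathcomp Require Import all_boot all_order all_algebra.
From mathcomp Require Import boolp classical_sets cardinality reals.
Set Implicit Arguments. Unset Strict Implicit. Unset Printing Implicit Defensive.
Import Order.TTheory GRing.Theory Num.Theory.
Local Open Scope classical_set_scope.
Local Open Scope ring_scope.

Section LeviCivita.
Variable R : realType.

Definition left_finite (x : rat -> R) : Prop :=
  forall q : rat, finite_set [set t : rat | t < q /\ x t != 0].

Record LC := MkLC { lc_fun :> rat -> R; lc_lf : left_finite lc_fun }.

Lemma lc0_lf : left_finite (fun _ => 0).
Proof.
move=> q; apply: (sub_finite_set _ (@finite_set0 rat)) => t /= [_].
by rewrite eqxx.
Qed.

Definition lc0 : LC := MkLC lc0_lf.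

Lemma lcadd_lf (x y : LC) : left_finite (fun t => x t + y t).
Proof.
move=> q.
have H : finite_set ([set t : rat | t < q /\ x t != 0] `|`
                      [set t : rat | t < q /\ y t != 0]).
  by rewrite finite_setU; split; apply: lc_lf.
apply: (sub_finite_set _ H).
move=> t /= [tq xy].
case: (eqVneq (x t) 0) => [x0|x0]; last by left.
by right; split => //; move: xy; rewrite x0 add0r.
Qed.

Definition lcadd (x y : LC) : LC := MkLC (lcadd_lf x y).

Lemma lcopp_lf (x : LC) : left_finite (fun t => - x t).
Proof.
move=> q; apply: (sub_finite_set _ (lc_lf x q)) => t /= [tq].
by rewrite oppr_eq0.
Qed.

Definition lcopp (x : LC) : LC := MkLC (lcopp_lf x).
Definition lcsub (x y : LC) : LC := lcadd x (lcopp y).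


(* x > 0  iff  x <> 0 and x[min supp x] > 0; written out: there is an
   exponent t with x t > 0 below which all coefficients vanish
   (t is then min supp x). *)
Definition lcpos (x : LC) : Prop :=
  exists t : rat, 0 < x t /\ forall s : rat, s < t -> x s = 0.

Definition lclt (x y : LC) : Prop := lcpos (lcsub y x).
Definition lcle (x y : LC) : Prop := x = y \/ lclt x y.

Definition lcconverges (u : nat -> LC) (l : LC) : Prop :=
  forall e : LC, lcpos e -> exists N0 : nat, forall N : nat, (N0 <= N)%N ->
    lclt (lcsub (u N) l) e /\ lclt (lcsub l (u N)) e.

Fixpoint lcpsum (u : nat -> LC) (N : nat) : LC :=
  match N with
  | O => lc0
  | S N' => lcadd (lcpsum u N') (u N')
  end.

Definition lcseries (u : nat -> LC) (s : LC) : Prop := lcconverges (lcpsum u) s.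

(* intervals [a,b], [a,b), (a,b], (a,b): closedness flags at each end;
   the condition a < b is imposed in [is_cover] *)
Record interval := MkInterval { ia : LC; ib : LC; iclosedl : bool; iclosedr : bool }.

Definition iset (I : interval) : set LC :=
  [set x | (if iclosedl I then lcle (ia I) x else lclt (ia I) x) /\
           (if iclosedr I then lcle x (ib I) else lclt x (ib I))].

Definition ilength (I : interval) : LC := lcsub (ib I) (ia I).

Definition is_cover (A : set LC) (S : nat -> interval) : Prop :=
  (forall n, lclt (ia (S n)) (ib (S n))) /\
  A `<=` \bigcup_n iset (S n) /\
  exists s, lcseries (fun n => ilength (S n)) s.

Definition cover_sums (A : set LC) : set LC :=
  [set s | exists S, is_cover A S /\ lcseries (fun n => ilength (S n)) s].

Definition lc_is_inf (E : set LC) (m : LC) : Prop :=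
  (forall s, E s -> lcle m s) /\
  (forall m', (forall s, E s -> lcle m' s) -> lcle m' m).

Definition outer_measure (A : set LC) (m : LC) : Prop := lc_is_inf (cover_sums A) m.

Definition outer_measurable (A : set LC) : Prop := exists m, outer_measure A m.

Definition L_measurable (A : set LC) : Prop :=
  outer_measurable A /\
  forall B, outer_measurable B ->
    outer_measurable (A `&` B) /\ outer_measurable (~` A `&` B) /\
    forall mB m1 m2, outer_measure B mB -> outer_measure (A `&` B) m1 ->
      outer_measure (~` A `&` B) m2 -> mB = lcadd m1 m2.

End LeviCivita.

(* Main.v *)
Require Import Defs.
From HB Require Import structures.
From mathcomp Require Import all_boot all_order all_algebra.
From mathcomp Require Import boolp classical_sets cardinality reals.
From mathcomp Require Import ring lra zify.
Set Implicit Arguments. Unset Strict Implicit. Unset Printing Implicit Defensive.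
Import Order.TTheory GRing.Theory Num.Theory.
Local Open Scope classical_set_scope.
Local Open Scope ring_scope.



Lemma lc_eq (R : realType) (x y : LC R) : (forall t, x t = y t) -> x = y.
Proof.
case: x => f hf; case: y => g hg /= H.
have efg : f = g by apply: funext.
subst g; congr MkLC; exact: Prop_irrelevance.
Qed.

HB.instance Definition _ (R : realType) := gen_eqMixin (LC R).
HB.instance Definition _ (R : realType) := gen_choiceMixin (LC R).

Section Z.
Variable R : realType.
Lemma lcaddA : associative (@lcadd R).
Proof. by move=> x y z; apply: lc_eq => t /=; rewrite addrA. Qed.
Lemma lcaddC : commutative (@lcadd R).
Proof. by move=> x y; apply: lc_eq => t /=; rewrite addrC. Qed.
Lemma lcadd0 : left_id (@lc0 R) (@lcadd R).
Proof. by move=> x; apply: lc_eq => t /=; rewrite add0r. Qed.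
Lemma lcaddN : left_inverse (@lc0 R) (@lcopp R) (@lcadd R).
Proof. by move=> x; apply: lc_eq => t /=; rewrite addNr. Qed.
End Z.

HB.instance Definition _ (R : realType) :=
  GRing.isZmodule.Build (LC R) (@lcaddA R) (@lcaddC R) (@lcadd0 R) (@lcaddN R).

Section Basics.
Variable R : realType.
Notation LC := (LC R).
Implicit Types x y z : LC.

Lemma lcaddE x y : lcadd x y = x + y. Proof. by []. Qed.
Lemma lcoppE x : lcopp x = - x. Proof. by []. Qed.
Lemma lcsubE x y : lcsub x y = x - y. Proof. by []. Qed.
Lemma lc0E : lc0 R = 0. Proof. by []. Qed.
Lemma coefD x y t : (x + y) t = x t + y t. Proof. by []. Qed.
Lemma coefN x t : (- x) t = - x t. Proof. by []. Qed.
Lemma coefB x y t : (x - y) t = x t - y t. Proof. by []. Qed.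
Lemma coef0 t : (0 : LC) t = 0. Proof. by []. Qed.

End Basics.



Lemma seq_min (s : seq rat) (t0 : rat) : t0 \in s ->
  exists2 m, m \in s & forall t, t \in s -> m <= t.
Proof.
elim: s t0 => [//|a s IH] t0 _.
case: (boolP (has (fun t => t < a) s)) => [/hasP [b bs _]|].
  have [m ms hm] := IH b bs.
  case: (leP a m) => am.
    exists a; first by rewrite inE eqxx.
    move=> t; rewrite inE => /orP [/eqP ->//|ts]; exact: le_trans am (hm t ts).
  exists m; first by rewrite inE ms orbT.
  move=> t; rewrite inE => /orP [/eqP ->|ts]; [exact: ltW|exact: hm].
move/hasPn => H; exists a; first by rewrite inE eqxx.
move=> t; rewrite inE => /orP [/eqP ->//|ts].
by have := H t ts; rewrite -leNgt.
Qed.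

Section Order.
Variable R : realType.
Notation LC := (LC R).
Implicit Types x y z e : LC.

Definition nonneg x := x = 0 \/ lcpos x.

Lemma lcleE x y : lcle x y <-> nonneg (y - x).
Proof.
rewrite /lcle /lclt /nonneg lcsubE; split.
  by case=> [->|h]; [left; exact: subrr|right].
case=> [h|h]; last by right.
by left; apply/eqP; rewrite eq_sym -subr_eq0; apply/eqP.
Qed.

Lemma lcltE x y : lclt x y <-> lcpos (y - x). Proof. by []. Qed.

Lemma lead_ex x : x <> 0 -> exists t, x t != 0 /\ forall s, s < t -> x s = 0.
Proof.
move=> x0.
have [t0 t0x] : exists t0, x t0 != 0.
  apply: contrapT => H; apply: x0; apply: lc_eq => t; rewrite coef0.
  by apply/eqP; apply: contrapT => /negP h; apply: H; exists t.
have [s hs] := iffLR (finite_seqP _) (lc_lf x (t0 + 1)).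
have t0F : t0 \in s.
  have : [set t : rat | t < t0 + 1 /\ x t != 0] t0 by split => //; rewrite ltrDl.
  by rewrite hs.
have [m ms hm] := seq_min t0F.
have : [set` s] m by [].
rewrite -hs => -[mlt mx]; exists m; split => // u um.
apply/eqP; apply: contrapT => /negP xu.
have : [set t : rat | t < t0 + 1 /\ x t != 0] u by split => //; exact: lt_trans um mlt.
rewrite hs /= => /hm; rewrite leNgt um //.
Qed.

Lemma tricho x : x = 0 \/ lcpos x \/ lcpos (- x).
Proof.
case: (pselect (x = 0)) => [->|x0]; first by left.
have [t [xt hs]] := lead_ex x0; right.
case: (ltgtP (x t) 0) => h.
- right; exists t; split; first by rewrite coefN oppr_gt0.
  by move=> s st; rewrite coefN hs // oppr0.
- by left; exists t; split.
- by move: xt; rewrite h eqxx.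
Qed.

Lemma pos_add x y : lcpos x -> lcpos y -> lcpos (x + y).
Proof.
move=> [t [xt hx]] [u [yu hy]].
case: (ltgtP t u) => tu.
- exists t; split; first by rewrite coefD (hy t tu) addr0.
  by move=> s st; rewrite coefD hx // hy ?addr0 //; exact: lt_trans st tu.
- exists u; split; first by rewrite coefD (hx u tu) add0r.
  by move=> s st; rewrite coefD hx ?hy ?addr0 //; exact: lt_trans st tu.
- subst u; exists t; split; first by rewrite coefD addr_gt0.
  by move=> s st; rewrite coefD hx // hy // addr0.
Qed.

Lemma not_pos_neg x t : x t < 0 -> (forall s, s < t -> x s = 0) -> ~ nonneg x.
Proof.
move=> xt hs [x0|[u [xu hu]]].
  by move: xt; rewrite x0 coef0 ltxx.
case: (ltgtP t u) => tu.
- by move: xt; rewrite hu // ltxx.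
- by move: xu; rewrite hs // ltxx.
- by subst u; move: (lt_trans xt xu); rewrite ltxx.
Qed.

Lemma pos_negpos x : lcpos x -> ~ lcpos (- x).
Proof.
move=> [t [xt hs]] hn; apply: (@not_pos_neg (- x) t).
- by rewrite coefN oppr_lt0.
- by move=> s st; rewrite coefN hs // oppr0.
- by right.
Qed.

Lemma pos_neq0 x : lcpos x -> x <> 0.
Proof. by move=> [t [xt _]] x0; move: xt; rewrite x0 coef0 ltxx. Qed.

Lemma nonneg_add x y : nonneg x -> nonneg y -> nonneg (x + y).
Proof.
move=> [->|hx] [->|hy]; rewrite ?addr0 ?add0r; [by left|by right|by right|].
right; exact: pos_add.
Qed.

Lemma nonneg_antisym x : nonneg x -> nonneg (- x) -> x = 0.
Proof.
move=> [//|hx] [h|h]; last by case: (pos_negpos hx h).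
by apply/eqP; rewrite -oppr_eq0; apply/eqP.
Qed.

Lemma nonneg_total x : nonneg x \/ nonneg (- x).
Proof. by case: (tricho x) => [->|[h|h]]; [left; left|left; right|right; right]. Qed.

Lemma lcle_refl x : lcle x x. Proof. by left. Qed.

Lemma lcle_trans x y z : lcle x y -> lcle y z -> lcle x z.
Proof.
rewrite !lcleE => h1 h2; have := nonneg_add h2 h1.
by rewrite addrA subrK.
Qed.

Lemma lcle_anti x y : lcle x y -> lcle y x -> x = y.
Proof.
rewrite !lcleE => h1 h2; apply/eqP; rewrite eq_sym -subr_eq0; apply/eqP.
by apply: nonneg_antisym; rewrite // opprB.
Qed.

Lemma lcle_total x y : lcle x y \/ lcle y x.
Proof. by rewrite !lcleE; case: (nonneg_total (y - x)); rewrite ?opprB; [left|right]. Qed.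

Lemma lclt_le x y : lclt x y -> lcle x y. Proof. by right. Qed.

Lemma lcnot_le_lt x y : ~ lcle x y -> lclt y x.
Proof.
rewrite lcleE lcltE => h; case: (tricho (y - x)) => [e|[p|p]].
- by case: h; left.
- by case: h; right.
- by rewrite opprB in p.
Qed.

Lemma lclt_not_le x y : lclt x y -> ~ lcle y x.
Proof.
rewrite lcleE lcltE => p [e|q].
- by apply: (pos_neq0 p); apply/eqP; rewrite -oppr_eq0 opprB; apply/eqP.
- by apply: (pos_negpos p); rewrite opprB.
Qed.

Lemma lcle_add2r x y z : lcle x y -> lcle (x + z) (y + z).
Proof. by rewrite !lcleE; rewrite opprD addrACA subrr addr0. Qed.

Lemma lcle_add x y x' y' : lcle x y -> lcle x' y' -> lcle (x + x') (y + y').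
Proof.
rewrite !lcleE => h1 h2; have := nonneg_add h1 h2.
by rewrite opprD addrACA.
Qed.

Lemma lcle_sub x y : lcle x y <-> lcle 0 (y - x).
Proof. by rewrite !lcleE subr0. Qed.

End Order.



Section Conv.
Variable R : realType.
Notation LC := (LC R).
Implicit Types x y z e : LC.
Implicit Types u v : nat -> LC.
Implicit Types a b c l : LC.

Definition small (q : rat) x := forall t, t < q -> x t = 0.

Lemma small0 q : small q 0. Proof. by []. Qed.
Lemma smallD q x y : small q x -> small q y -> small q (x + y).
Proof. by move=> hx hy t tq; rewrite coefD hx // hy // addr0. Qed.
Lemma smallN q x : small q x -> small q (- x).
Proof. by move=> hx t tq; rewrite coefN hx // oppr0. Qed.
Lemma smallB q x y : small q x -> small q y -> small q (x - y).
Proof. by move=> hx hy; apply: smallD => //; exact: smallN. Qed.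
Lemma smallNE q x : small q (- x) -> small q x.
Proof. by move/smallN; rewrite opprK. Qed.
Lemma small_monoq q q' x : q' <= q -> small q x -> small q' x.
Proof. by move=> qq h t tq; apply: h; exact: lt_le_trans tq qq. Qed.

Lemma mono_lf (q : rat) : left_finite (fun t : rat => if t == q then (1 : R) else 0).
Proof.
move=> r; apply: (sub_finite_set _ (finite_set1 q)) => t /= [_].
by case: (boolP (t == q)) => [/eqP ->|_] //; rewrite eqxx.
Qed.
Definition mono q : LC := MkLC (mono_lf q).

Lemma mono_pos q : lcpos (mono q).
Proof.
exists q; split; first by rewrite /= eqxx ltr01.
by move=> s sq /=; rewrite (lt_eqF sq).
Qed.

Lemma small_lt q x e :
  (exists t, t < q /\ 0 < e t /\ forall s, s < t -> e s = 0) -> small q x -> lclt x e.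
Proof.
move=> [t [tq [et hs]]] hx; rewrite lcltE; exists t; split.
  by rewrite coefB hx // subr0.
by move=> s st; rewrite coefB hs // hx ?subr0 //; exact: lt_trans st tq.
Qed.

Lemma pos_small_lt e : lcpos e -> exists q, forall y, small q y -> lclt y e.
Proof.
move=> [t [et hs]]; exists (t + 1) => y; apply: small_lt.
by exists t; split => //; rewrite ltrDl.
Qed.

Lemma small_of_lt_mono q y : lclt y (mono q) -> lclt (- y) (mono q) -> small q y.
Proof.
rewrite !lcltE => h1 h2 t tq; apply: contrapT => yt.
have y0 : y <> 0 by move=> y0; apply: yt; rewrite y0.
have [t1 [yt1 hs]] := lead_ex y0.
have t1q : t1 < q.
  case: (leP t1 t) => [h|h]; first exact: le_lt_trans h tq.
  by case: yt; apply: hs.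
have monoz s : s <= t1 -> mono q s = 0.
  by move=> st /=; rewrite (lt_eqF (le_lt_trans st t1q)).
case: (ltgtP (y t1) 0) => ys; last by move: yt1; rewrite ys eqxx.
- apply: (@not_pos_neg _ (mono q - - y) t1); last by right.
  + by rewrite coefB coefN opprK monoz // add0r.
  + move=> s st; rewrite coefB coefN hs // monoz; [by rewrite ?oppr0 ?addr0 ?add0r ?subr0|exact: ltW].
- apply: (@not_pos_neg _ (mono q - y) t1); last by right.
  + by rewrite coefB monoz // sub0r oppr_lt0.
  + by move=> s st; rewrite coefB hs // monoz ?subr0 //; exact: ltW.
Qed.

Lemma conv_small (u : nat -> LC) l :
  lcconverges u l <-> forall q, exists N, forall n, (N <= n)%N -> small q (u n - l).
Proof.
split.
  move=> h q; have [N hN] := h _ (mono_pos q); exists N => n Nn.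
  have [h1 h2] := hN n Nn; apply: small_of_lt_mono => //.
  by rewrite opprB.
move=> h e ep; have [q hq] := pos_small_lt ep.
have [N hN] := h q; exists N => n Nn; split.
  exact: (hq _ (hN n Nn)).
by apply: hq; rewrite lcsubE -opprB; apply: smallN; apply: hN.
Qed.

Lemma small_all_eq0 x : (forall q, small q x) -> x = 0.
Proof. by move=> h; apply: lc_eq => t; rewrite coef0; apply: (h (t + 1)); rewrite ltrDl. Qed.

Lemma lim_unique u a b : lcconverges u a -> lcconverges u b -> a = b.
Proof.
rewrite !conv_small => ha hb; apply/eqP; rewrite -subr_eq0; apply/eqP.
apply: small_all_eq0 => q.
have [N1 h1] := ha q; have [N2 h2] := hb q.
have := smallB (h2 (maxn N1 N2) (leq_maxr _ _)) (h1 (maxn N1 N2) (leq_maxl _ _)).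
by rewrite opprB addrC addrA subrK.
Qed.

Lemma lim_const c : lcconverges (fun _ => c) c.
Proof. by rewrite conv_small => q; exists 0%N => n _; rewrite subrr. Qed.

Lemma lim_add u v a b : lcconverges u a -> lcconverges v b ->
  lcconverges (fun n => u n + v n) (a + b).
Proof.
rewrite !conv_small => ha hb q.
have [N1 h1] := ha q; have [N2 h2] := hb q; exists (maxn N1 N2) => n.
rewrite geq_max => /andP [n1 n2].
by rewrite opprD addrACA; apply: smallD; [exact: h1|exact: h2].
Qed.

Lemma lim_opp u a : lcconverges u a -> lcconverges (fun n => - u n) (- a).
Proof.
rewrite !conv_small => ha q; have [N h] := ha q; exists N => n Nn.
by rewrite -opprD; apply: smallN; apply: h.
Qed.

Lemma lim_ext u v a : (forall n, u n = v n) -> lcconverges u a -> lcconverges v a.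
Proof. by move=> e; have -> : v = u by apply: funext => n; rewrite e. Qed.

Lemma lim_le u v a b : (exists N0, forall n, (N0 <= n)%N -> lcle (u n) (v n)) ->
  lcconverges u a -> lcconverges v b -> lcle a b.
Proof.
move=> [N0 hN] ha hb; apply: contrapT => /lcnot_le_lt.
rewrite lcltE => -[t [pt hs]].
move: ha hb; rewrite !conv_small => ha hb.
have [N1 h1] := ha (t + 1); have [N2 h2] := hb (t + 1).
set n := maxn N0 (maxn N1 N2).
have hn0 : (N0 <= n)%N by rewrite leq_maxl.
have hn1 : (N1 <= n)%N by rewrite /n (leq_trans (leq_maxl N1 N2)) // leq_maxr.
have hn2 : (N2 <= n)%N by rewrite /n (leq_trans (leq_maxr N1 N2)) // leq_maxr.
have := hN n hn0; rewrite lcleE.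
have -> : v n - u n = (v n - b) - (u n - a) - (a - b).
  by apply: lc_eq => tt; rewrite !(coefB, coefD, coefN); ring.
have tq : t < t + 1 by rewrite ltrDl.
apply: (@not_pos_neg _ _ t).
  have := h1 n hn1 t tq; have := h2 n hn2 t tq; move: pt.
  rewrite !coefB => *; lra.
move=> s st.
have sq : s < t + 1 by rewrite (lt_trans st) // ltrDl.
have := h1 n hn1 s sq; have := h2 n hn2 s sq; have := hs s st.
rewrite !coefB => *; lra.
Qed.

Definition stab (u : nat -> LC) :=
  forall q, exists N, forall n, (N <= n)%N -> small q (u n - u N).

Lemma complete u : stab u -> exists l, lcconverges u l.
Proof.
move=> H.
pose Nq q := projT1 (cid (H q)).
have hNq q : forall n, (Nq q <= n)%N -> small q (u n - u (Nq q)) := projT2 (cid (H q)).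
pose f t := u (Nq (t + 1)) t.
have key q t : t < q -> f t = u (Nq q) t.
  move=> tq; set M := maxn (Nq (t + 1)) (Nq q).
  have tq1 : t < t + 1 by rewrite ltrDl.
  have e1 := hNq (t + 1) M (leq_maxl _ _) t tq1.
  have e2 := hNq q M (leq_maxr _ _) t tq.
  rewrite coefB in e1 e2.
  by rewrite /f; move/eqP: e1; rewrite subr_eq0 => /eqP <-; move/eqP: e2; rewrite subr_eq0 => /eqP.
have lf : left_finite f.
  move=> q; apply: (sub_finite_set _ (lc_lf (u (Nq q)) q)) => t /= [tq ft].
  by split => //; rewrite -(key q).

exists (MkLC lf); rewrite conv_small => q; exists (Nq q) => n Nn t tq.
by rewrite coefB /= (key q) // -coefB (hNq q n Nn t tq).
Qed.

End Conv.



Section Series.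
Variable R : realType.
Notation LC := (LC R).
Implicit Types x y z e a b c l : LC.
Implicit Types u v : nat -> LC.

Lemma le0E x : lcle 0 x <-> nonneg x.
Proof. by rewrite lcleE subr0. Qed.

Lemma nonneg_lead_ge0 y t : nonneg y -> (forall s, s < t -> y s = 0) -> 0 <= y t.
Proof.
move=> hy hs; case: (leP 0 (y t)) => // h.
by case: (not_pos_neg h hs hy).
Qed.

Lemma small_le q a b : nonneg a -> lcle a b -> small q b -> small q a.
Proof.
move=> [->|[t [ha hs]]] hab hb; first exact: small0.
move=> s sq; apply: contrapT => asn.
have tq : t < q.
  case: (ltP t q) => // h; case: asn; apply: hs; exact: lt_le_trans sq h.
have hba : 0 <= (b - a) t.
  apply: nonneg_lead_ge0; first by rewrite -lcleE.
  move=> r rt; rewrite coefB hs // hb ?subr0 //; exact: lt_trans rt tq.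
move: hba; rewrite coefB hb // => h.
move: h ha; lra.
Qed.

Lemma psumS u n : lcpsum u n.+1 = lcpsum u n + u n. Proof. by []. Qed.
Lemma psum0 u : lcpsum u 0 = 0. Proof. by []. Qed.

Lemma psumE u n : lcpsum u n = \sum_(i < n) u i.
Proof. by elim: n => [|n IH]; rewrite ?big_ord0 // big_ord_recr /= -IH. Qed.

Lemma coef_sum n (f : 'I_n -> LC) t : (\sum_(i < n) f i) t = \sum_(i < n) f i t.
Proof.
elim: n f => [|n IH] f; first by rewrite !big_ord0.
by rewrite !big_ord_recr coefD IH.
Qed.

Lemma lcle_sum n (f g : 'I_n -> LC) : (forall i, lcle (f i) (g i)) ->
  lcle (\sum_(i < n) f i) (\sum_(i < n) g i).
Proof.
elim: n f g => [|n IH] f g h; first by rewrite !big_ord0; exact: lcle_refl.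
by rewrite !big_ord_recr; apply: lcle_add => //; apply: IH.
Qed.

Lemma psum_mono u m n : (forall k, nonneg (u k)) -> (m <= n)%N ->
  lcle (lcpsum u m) (lcpsum u n).
Proof.
move=> hu; elim: n => [|n IH]; first by rewrite leqn0 => /eqP ->; exact: lcle_refl.
rewrite leq_eqVlt => /orP [/eqP ->|]; first exact: lcle_refl.
rewrite ltnS => /IH h; apply: (lcle_trans h).
by rewrite psumS lcleE addrC addKr.
Qed.

Lemma series_le u (s : LC) : (forall k, nonneg (u k)) -> lcseries u s ->
  forall n, lcle (lcpsum u n) s.
Proof.
move=> hu hs n; apply: (@lim_le _ (fun _ => lcpsum u n) (lcpsum u)) => //.
- by exists n => k nk; apply: psum_mono.
- exact: lim_const.
Qed.

Lemma series_bound u (s : LC) b : lcseries u s -> (forall n, lcle (lcpsum u n) b) -> lcle s b.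
Proof.
move=> hs hb; apply: (@lim_le _ (lcpsum u) (fun _ => b)) => //.
- by exists 0%N.
- exact: lim_const.
Qed.

Lemma series_terms u (s : LC) : lcseries u s ->
  forall q, exists N, forall n, (N <= n)%N -> small q (u n).
Proof.
rewrite /lcseries conv_small => h q; have [N hN] := h q; exists N => n Nn.
have := smallB (hN n.+1 (leqW Nn)) (hN n Nn).
by rewrite psumS opprB addrA subrK addrC addKr.
Qed.

Lemma terms_series u : (forall q, exists N, forall n, (N <= n)%N -> small q (u n)) ->
  exists s, lcseries u s.
Proof.
move=> h; apply: complete => q; have [N hN] := h q; exists N.
elim => [|n IH]; first by rewrite leqn0 => /eqP ->; rewrite subrr.
rewrite leq_eqVlt => /orP [/eqP <-|]; first by rewrite subrr.
rewrite ltnS => Nn; rewrite psumS addrAC; apply: smallD; first exact: IH.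
exact: hN.
Qed.

Lemma lcle_small_nonneg x q : nonneg x -> small q x -> forall y, nonneg y -> lcle y x -> small q y.
Proof. by move=> _ hx y hy hyx; apply: (small_le hy hyx hx). Qed.

End Series.



Section Covers.
Variable R : realType.
Notation LC := (LC R).
Implicit Types x y z e a b c l m : LC.
Implicit Types u v : nat -> LC.
Implicit Types X Y Z : set LC.

Definition len (S : nat -> Defs.interval R) n := ilength (S n).

Lemma cover_sub X Y S : X `<=` Y -> is_cover Y S -> is_cover X S.
Proof. by move=> XY [h1 [h2 h3]]; split => //; split => //; exact: subset_trans XY h2. Qed.

Lemma cover_sums_sub X Y s : X `<=` Y -> cover_sums Y s -> cover_sums X s.
Proof. by move=> XY [S [hS hs]]; exists S; split => //; exact: cover_sub hS. Qed.

Lemma len_pos X S n : is_cover X S -> lcpos (len S n).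
Proof. by move=> [h _]; exact: h. Qed.

Lemma len_nonneg X S n : is_cover X S -> nonneg (len S n).
Proof. by move=> h; right; exact: len_pos h. Qed.

Lemma cover_sum_nonneg X s : cover_sums X s -> nonneg s.
Proof.
move=> [S [hS hs]]; rewrite -le0E.
have := series_le (fun k => len_nonneg k hS) hs 0; by [].
Qed.

Lemma om_le_sum X a s : outer_measure X a -> cover_sums X s -> lcle a s.
Proof. by move=> [h _]; exact: h. Qed.

Lemma om_lb X a m : outer_measure X a -> (forall s, cover_sums X s -> lcle m s) -> lcle m a.
Proof. by move=> [_ h]; exact: h. Qed.

Lemma om_lb_sub X Y b m : X `<=` Y -> outer_measure Y b ->
  (forall s, cover_sums X s -> lcle m s) -> lcle m b.
Proof. by move=> XY hY h; apply: (om_lb hY) => s hs; apply: h; exact: cover_sums_sub hs. Qed.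

Lemma om_mono X Y a b : X `<=` Y -> outer_measure X a -> outer_measure Y b -> lcle a b.
Proof. by move=> XY hX hY; apply: (om_lb_sub XY hY) => s; exact: om_le_sum. Qed.

Lemma om_unique X a b : outer_measure X a -> outer_measure X b -> a = b.
Proof.
move=> ha hb; apply: lcle_anti; [exact: (@om_mono X X a b (fun _ h => h) ha hb)|exact: (@om_mono X X b a (fun _ h => h) hb ha)].
Qed.

Lemma om_nonneg X a : outer_measure X a -> nonneg a.
Proof.
move=> ha; rewrite -le0E; apply: (om_lb ha) => s hs; rewrite le0E.
exact: cover_sum_nonneg hs.
Qed.

Lemma lt_addpos a e : lcpos e -> lclt a (a + e).
Proof. by move=> ep; rewrite lcltE addrC addKr. Qed.

Lemma om_approx X a e : outer_measure X a -> lcpos e ->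
  exists S s, is_cover X S /\ lcseries (len S) s /\ lcle s (a + e).
Proof.
move=> ha ep; apply: contrapT => H.
have : lcle (a + e) a.
  apply: (om_lb ha) => s [S [hS hs]]; apply: lclt_le; apply: lcnot_le_lt => h.
  by apply: H; exists S, s.
by apply: lclt_not_le; apply: lt_addpos.
Qed.

Definition merge2 (S S' : nat -> Defs.interval R) n := if odd n then S' n./2 else S n./2.

Lemma psum_merge2 S S' k :
  lcpsum (len (merge2 S S')) k.*2 = lcpsum (len S) k + lcpsum (len S') k /\
  lcpsum (len (merge2 S S')) k.*2.+1 = lcpsum (len S) k.+1 + lcpsum (len S') k.
Proof.
elim: k => [|k [IH1 IH2]].
  by split; rewrite ?psumS !psum0 ?addr0 ?add0r //.
have e1 : lcpsum (len (merge2 S S')) k.+1.*2 =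
    lcpsum (len S) k.+1 + lcpsum (len S') k.+1.
  rewrite doubleS psumS IH2 psumS [in RHS]psumS -addrA; congr (_ + _).
  by rewrite /len /merge2 /= odd_double /= uphalf_double.
split => //; rewrite psumS e1 [in RHS]psumS addrAC; congr (_ + _).
by rewrite /len /merge2 /= odd_double /= doubleK.
Qed.

Lemma merge2_cover X Y S S' s s' :
  is_cover X S -> lcseries (len S) s -> is_cover Y S' -> lcseries (len S') s' ->
  is_cover (X `|` Y) (merge2 S S') /\ lcseries (len (merge2 S S')) (s + s').
Proof.
move=> hS hs hS' hs'.
have conv : lcseries (len (merge2 S S')) (s + s').
  move: hs hs'; rewrite /lcseries !conv_small => h1 h2 q.
  have [N1 hN1] := h1 q; have [N2 hN2] := h2 q.
  exists (maxn N1 N2).+1.*2 => n hn.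
  have hk : (maxn N1 N2 < n./2)%N.
    by move: (half_leq hn); rewrite doubleK.
  have k1 : (N1 <= n./2)%N by apply: leq_trans (leq_maxl N1 N2) (ltnW hk).
  have k2 : (N2 <= n./2)%N by apply: leq_trans (leq_maxr N1 N2) (ltnW hk).
  have k1' : (N1 <= n./2.+1)%N by apply: leqW.
  rewrite -(odd_double_half n); have [e1 e2] := psum_merge2 S S' n./2.
  case: (odd n); rewrite ?add0n ?add1n ?e1 ?e2 opprD addrACA;
    apply: smallD; by [apply: hN1|apply: hN2].
split => //; split; first by move=> n; rewrite /merge2; case: (odd n); case: hS' => // + _;
  case: hS => //.
split; last by exists (s + s').
move=> x [xX|xY].
- have [_ [hc _]] := hS; have [n _ hn] := hc x xX.
  by exists n.*2 => //; rewrite /merge2 odd_double doubleK.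
- have [_ [hc _]] := hS'; have [n _ hn] := hc x xY.
  exists n.*2.+1 => //; rewrite /merge2 /= odd_double /= uphalf_double //.
Qed.

End Covers.



Fixpoint tri D := if D is D'.+1 then (tri D' + D'.+1)%N else 0%N.
Definition next (p : nat * nat) :=
  if p.2 is n.+1 then (p.1.+1, n) else (0%N, p.1.+1).
Fixpoint gdiag i := if i is i'.+1 then next (gdiag i') else (0%N, 0%N).

Lemma gdiag_row D : gdiag (tri D) = (0%N, D) ->
  forall j, (j <= D)%N -> gdiag (tri D + j) = (j, D - j)%N.
Proof.
move=> h0; elim => [|j IH] jD; first by rewrite addn0 subn0.
rewrite addnS /= IH; last exact: ltnW.
rewrite /next /=; case E: (D - j)%N => [|m]; first by lia.
by congr pair; lia.
Qed.

Lemma gdiag_tri D : gdiag (tri D) = (0%N, D).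
Proof.
elim: D => [//|D IH] /=.
rewrite addnS; change (next (gdiag (tri D + D)) = (0%N, D.+1)).
by rewrite (@gdiag_row D IH D (leqnn D)) subnn.
Qed.

Lemma gdiag_at D j : (j <= D)%N -> gdiag (tri D + j) = (j, D - j)%N.
Proof. exact: (@gdiag_row D (gdiag_tri D) j). Qed.

Lemma gdiag_surj K n : gdiag (tri (K + n) + K) = (K, n).
Proof. by rewrite gdiag_at ?leq_addr // addKn. Qed.

Lemma tri_decomp i : exists D j, (j <= D)%N /\ i = (tri D + j)%N.
Proof.
elim: i => [|i [D [j [jD ->]]]]; first by exists 0%N, 0%N.
case: (ltnP j D) => h.
  by exists D, j.+1; split => //; rewrite addnS.
exists D.+1, 0%N; split => //=; have -> : j = D by lia.
by rewrite addn0 addnS.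
Qed.

Lemma tri_mono D D' : (D <= D')%N -> (tri D <= tri D')%N.
Proof.
elim: D' => [|D' IH]; first by rewrite leqn0 => /eqP ->.
rewrite leq_eqVlt => /orP [/eqP ->//|]; rewrite ltnS => /IH h /=; lia.
Qed.

Lemma tri_ge D : (D <= tri D)%N.
Proof. elim: D => //= D IH; lia. Qed.

Section Eps.
Variable R : realType.
Notation LC := (LC R).
Implicit Types x y z e a b c l m : LC.
Implicit Types u v : nat -> LC.

Lemma eps2 a b : (forall e, lcpos e -> lcle a (b + e + e)) -> lcle a b.
Proof.
move=> H; apply: contrapT => /lcnot_le_lt; rewrite lcltE => -[t [pt hs]].
have := H _ (@mono_pos R (t + 1)); rewrite lcleE; apply: (@not_pos_neg _ _ t).
  have tt1 : t != t + 1 by rewrite lt_eqF // ltrDl.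
  move: pt; rewrite !(coefB, coefD) /= (negbTE tt1) => *; lra.
move=> s st.
have ts1 : s != t + 1 by rewrite lt_eqF // (lt_trans st) // ltrDl.
move: (hs s st); rewrite !(coefB, coefD) /= (negbTE ts1) => *; lra.
Qed.

Lemma eps1 a b : (forall e, lcpos e -> lcle a (b + e)) -> lcle a b.
Proof.
move=> H; apply: eps2 => e ep; apply: (lcle_trans (H e ep)).
rewrite lcleE (_ : b + e + e - (b + e) = e); first by right.
by apply: lc_eq => t; rewrite !(coefB, coefD); ring.
Qed.

Lemma shift_lf (k : nat) x : left_finite (fun t : rat => x (t - k%:R)).
Proof.
move=> q; apply: (sub_finite_set _ (finite_image (fun t => t + k%:R) (lc_lf x (q - k%:R)))).
move=> t /= [tq xt]; exists (t - k%:R) => /=; last by rewrite subrK.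
by split => //; rewrite ltrBlDr subrK.
Qed.
Definition shift (k : nat) x : LC := MkLC (shift_lf k x).

Lemma shift_pos k e : lcpos e -> lcpos (shift k e).
Proof.
move=> [t [et hs]]; exists (t + k%:R); split; first by rewrite /= addrK.
by move=> s st /=; apply: hs; rewrite ltrBlDr.
Qed.

Lemma sum_shift_le e D : lcpos e -> lcle (\sum_(i < D) shift i.+1 e) e.
Proof.
move=> [t [et hs]]; right; rewrite lcltE.
have z s : s <= t -> (\sum_(i < D) shift i.+1 e) s = 0.
  move=> st; rewrite coef_sum big1 // => i _ /=; apply: hs.
  rewrite ltrBlDr (le_lt_trans st) // ltrDl ltr0n //.
exists t; split; first by rewrite coefB z // subr0.
by move=> s st; rewrite coefB z ?hs ?subr0 //; exact: ltW.
Qed.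

Lemma shift_small e : lcpos e -> forall q, exists K, forall k, (K <= k)%N -> small q (shift k e).
Proof.
move=> [t [et hs]] q; exists (Num.truncn (q - t)).+1 => k hk s sq /=; apply: hs.
have h1 := Num.Theory.truncnS_gt (q - t).
have h2 : ((Num.truncn (q - t)).+1%:R <= k%:R :> rat) by rewrite ler_nat.
move: h1 h2 sq; lra.
Qed.

End Eps.



Section Merge.
Variable R : realType.
Notation LC := (LC R).
Implicit Types x y z e a b c l m : LC.
Implicit Types u v : nat -> LC.

Lemma len_le_psum (S : nat -> Defs.interval R) X n : is_cover X S ->
  lcle (len S n) (lcpsum (len S) n.+1).
Proof.
move=> hS; rewrite lcleE psumS addrK -le0E.
apply: (lcle_trans _ (psum_mono (fun k => len_nonneg k hS) (leq0n n))).
exact: lcle_refl.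
Qed.

Lemma merge_cover (X : nat -> set LC) (F : nat -> nat -> Defs.interval R)
    (beta : nat -> LC) bb :
  (forall K, is_cover (X K) (F K)) ->
  (forall K n, lcle (lcpsum (len (F K)) n) (beta K)) ->
  (forall q, exists K0, forall K, (K0 <= K)%N -> small q (beta K)) ->
  (forall D, lcle (\sum_(K < D) beta K) bb) ->
  exists s, cover_sums (\bigcup_K X K) s /\ lcle s bb.
Proof.
move=> hF hb hbs hbb.
pose T i := F (gdiag i).1 (gdiag i).2.
pose Q K (m : nat) := lcpsum (len (F K)) m.
pose SD D := \sum_(K < D) Q K (D - K)%N.
have Tnn i : nonneg (len T i) by apply: (len_nonneg _ (hF _)).
have row D : lcpsum (len T) (tri D) = SD D -> forall j, (j <= D.+1)%N ->
    lcpsum (len T) (tri D + j) = SD D + \sum_(K < j) len (F K) (D - K)%N.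
  move=> h0; elim => [|j IH] jD; first by rewrite addn0 big_ord0 addr0.
  rewrite addnS psumS IH; last exact: ltnW.
  by rewrite big_ord_recr [in RHS]addrA /len /T gdiag_at.
have diag D : lcpsum (len T) (tri D) = SD D.
  elim: D => [|D IH]; first by rewrite /SD big_ord0.
  have -> : tri D.+1 = (tri D + D.+1)%N by [].
  have e1 : \sum_(K < D) Q K (D.+1 - K)%N =
      \sum_(K < D) Q K (D - K)%N + \sum_(K < D) len (F K) (D - K)%N.
    rewrite -big_split; apply: eq_bigr => K _.
    by rewrite subSn ?psumS //; exact: ltnW (ltn_ord K).
  have e2 : \sum_(K < D.+1) len (F K) (D - K)%N =
      \sum_(K < D) len (F K) (D - K)%N + len (F D) 0 by rewrite big_ord_recr subnn.
  have e3 : \sum_(K < D.+1) Q K (D.+1 - K)%N =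
      \sum_(K < D) Q K (D.+1 - K)%N + Q D 1 by rewrite big_ord_recr subSnn.
  rewrite (row D IH D.+1 (leqnn _)) /SD e2 e3 e1 /Q psumS psum0 add0r.
  by rewrite !addrA.
have bound i : lcle (lcpsum (len T) i) bb.
  apply: (lcle_trans (psum_mono Tnn (tri_ge i))); rewrite diag.
  apply: (lcle_trans _ (hbb i)); apply: lcle_sum => K; exact: hb.
have terms : forall q, exists N, forall n, (N <= n)%N -> small q (len T n).
  move=> q; have [K0 hK0] := hbs q.
  have unif K1 : exists M, forall K, (K < K1)%N -> forall n, (M <= n)%N ->
      small q (len (F K) n).
    elim: K1 => [|K1 [M1 hM1]]; first by exists 0%N.
    have [_ [_ [s hs]]] := hF K1; have [M2 hM2] := series_terms hs q.
    exists (maxn M1 M2) => K; rewrite ltnS leq_eqVlt => /orP [/eqP ->|KK] n hn.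
      by apply: hM2; apply: leq_trans hn; exact: leq_maxr.
    by apply: hM1 => //; apply: leq_trans hn; exact: leq_maxl.
  have [M hM] := unif K0.
  exists (tri (K0 + M)) => i hi.
  have [D [j [jD ei]]] := tri_decomp i.
  have DK : (K0 + M <= D)%N.
    case: (leqP (K0 + M) D) => // h.
    have := tri_mono h; rewrite /=; lia.
  have -> : len T i = len (F j) (D - j)%N by rewrite /len /T ei gdiag_at.
  case: (leqP K0 j) => Kj.
    apply: (small_le (len_nonneg _ (hF j))) (hK0 j Kj).
    apply: (lcle_trans (len_le_psum _ (hF j))); exact: hb.
  apply: hM => //; lia.
have [s hs] := terms_series terms.
exists s; split; last exact: series_bound hs bound.
exists T; split => //; split.
  by move=> i; have [h _] := hF (gdiag i).1; exact: h.
split; last by exists s.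
move=> x [K _ xK]; have [_ [hc _]] := hF K; have [n _ hn] := hc x xK.
by exists (tri (K + n) + K)%N => //; rewrite /T gdiag_surj.
Qed.

End Merge.



Section Meas.
Variable R : realType.
Notation LC := (LC R).
Implicit Types x y z e a b c l m : LC.
Implicit Types X Y Z B : set LC.

Lemma lcle_comb (a1 b1 a2 b2 a0 b0 : LC) : lcle a1 b1 -> lcle a2 b2 ->
  b0 - a0 = (b1 - a1) + (b2 - a2) -> lcle a0 b0.
Proof. by rewrite !lcleE => h1 h2 ->; exact: nonneg_add. Qed.

Lemma lcle_eqr a b c : lcle a b -> b = c -> lcle a c.
Proof. by move=> h <-. Qed.

Lemma meas_split X B b : L_measurable X -> outer_measure B b ->
  exists p r, outer_measure (X `&` B) p /\ outer_measure (~` X `&` B) r /\ b = p + r.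
Proof.
move=> [_ hX] hB; have [[p hp] [[r hr] hadd]] := hX B (ex_intro _ b hB).
by exists p, r; split => //; split => //; exact: hadd.
Qed.

Lemma cover_sums_of X S s : is_cover X S -> lcseries (len S) s -> cover_sums X s.
Proof. by move=> h1 h2; exists S. Qed.

Lemma meas_inter X Y : L_measurable X -> L_measurable Y -> L_measurable (X `&` Y).
Proof.
move=> hX hY; split.
  have [[a ha] _] := hX.
  have [u [w [hu _]]] := meas_split hY ha.
  by exists u; rewrite setIC.
move=> B [b hB].
have [p [r [hp [hr ebp]]]] := meas_split hX hB.
have [u [w [hu [hw epu]]]] := meas_split hY hp.
have eq1 : X `&` Y `&` B = Y `&` (X `&` B).
  by rewrite setIA [Y `&` X]setIC.
have hD : outer_measure (~` (X `&` Y) `&` B) (w + r).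
  split.
    move=> s [S0 [hS0 hs0]]; apply: eps1 => e ep.
    have [S1 [s1 [hS1 [hs1 le1]]]] := om_approx hu ep.
    have [hc hsum] := merge2_cover hS0 hs0 hS1 hs1.
    have hb : lcle b (s + s1).
      apply: (om_le_sum hB); apply: (cover_sums_sub _ (cover_sums_of hc hsum)).
      move=> x xB; case: (pselect (X x /\ Y x)) => [[xX xY]|nxy].
        by right.
      by left.
    apply: (lcle_comb hb le1).
    rewrite ebp epu; apply: lc_eq => t; rewrite !(coefB, coefD); ring.
  move=> m' hm'; apply: eps2 => e ep.
  have [S1 [s1 [hS1 [hs1 le1]]]] := om_approx hw ep.
  have [S2 [s2 [hS2 [hs2 le2]]]] := om_approx hr ep.
  have [hc hsum] := merge2_cover hS1 hs1 hS2 hs2.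
  have h1 : lcle m' (s1 + s2).
    apply: hm'; apply: (cover_sums_sub _ (cover_sums_of hc hsum)).
    move=> x [nxy xB]; case: (pselect (X x)) => xX.
      by left; split; [move=> xY; apply: nxy|split].
    by right.
  apply: (lcle_trans h1); apply: (lcle_eqr (lcle_add le1 le2)).
  apply: lc_eq => t; rewrite !(coefB, coefD); ring.
split; first by exists u; rewrite eq1.
split; first by exists (w + r).
move=> mB m1 m2 hmB hm1 hm2.
rewrite eq1 in hm1.
rewrite (om_unique hmB hB) (om_unique hm1 hu) (om_unique hm2 hD) ebp epu.
by rewrite lcaddE addrA.
Qed.
End Meas.



Section Main.
Variable R : realType.
Notation LC := (LC R).
Implicit Types x y z e a b c : LC.
Variable A : nat -> set LC.
Variable m : nat -> LC.
Variable l : LC.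
Hypothesis hA : forall n, L_measurable (A n).
Hypothesis hm : forall N, outer_measure (\bigcap_(n in `I_N.+1) A n) (m N).
Hypothesis hconv : lcconverges m l.

Let Cn N := \bigcap_(n in `I_N.+1) A n.
Let Cinf := \bigcap_n A n.

Lemma Cn0 : Cn 0 = A 0.
Proof.
apply/seteqP; split => x.
  by move=> h; apply: h; rewrite /= ltnS.
by move=> h n /=; rewrite ltnS leqn0 => /eqP ->.
Qed.

Lemma CnS N : Cn N.+1 = Cn N `&` A N.+1.
Proof.
apply/seteqP; split => x.
  move=> h; split; last by apply: h => /=.
  by move=> n /= nN; apply: h => /=; exact: leqW.
move=> [h1 h2] n /=; rewrite ltnS leq_eqVlt => /orP [/eqP ->//|].
by rewrite ltnS => nN; apply: h1.
Qed.

Lemma Cmeas N : L_measurable (Cn N).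
Proof.
elim: N => [|N IH]; first by rewrite Cn0.
by rewrite CnS; apply: meas_inter.
Qed.

Lemma Cn_sub N K : (N <= K)%N -> Cn K `<=` Cn N.
Proof. by move=> NK x h n /= nN; apply: h => /=; exact: leq_trans nN _. Qed.

Lemma Cinf_sub N : Cinf `<=` Cn N.
Proof. by move=> x h n _; exact: h. Qed.

Lemma notC_ex N x : Cn N x -> ~ Cinf x -> exists K, Cn (N + K) x /\ ~ Cn (N + K).+1 x.
Proof.
move=> hx hn; apply: contrapT => H; apply: hn => n _.
have all K : Cn (N + K) x.
  elim: K => [|K IH]; first by rewrite addn0.
  by rewrite addnS; apply: contrapT => h; apply: H; exists K.
by apply: (all n) => /=; rewrite ltnS leq_addl.
Qed.

Lemma m_dec N K : (N <= K)%N -> lcle (m K) (m N).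
Proof. by move=> NK; exact: om_mono (Cn_sub NK) (hm K) (hm N). Qed.

Lemma l_le N : lcle l (m N).
Proof.
apply: (@lim_le _ m (fun _ => m N)) => //; last exact: lim_const.
by exists N => k; exact: m_dec.
Qed.

Lemma mdiff N K : (N <= K)%N -> outer_measure (~` Cn K `&` Cn N) (m N - m K).
Proof.
move=> NK; have [p [r [hp [hr e]]]] := meas_split (Cmeas K) (hm N).
have : Cn K `&` Cn N = Cn K by apply/setIidPl; exact: Cn_sub.
move=> eK; rewrite eK in hp; rewrite (om_unique hp (hm K)) in e.
by have -> : m N - m K = r by rewrite e; apply: lc_eq => t; rewrite !(coefB, coefD); ring.
Qed.

Lemma telescope N D : \sum_(K < D) (m (N + K) - m (N + K).+1) = m N - m (N + D).
Proof.
elim: D => [|D IH]; first by rewrite big_ord0 addn0 subrr.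
by rewrite big_ord_recr /= IH addrA subrK addnS.
Qed.

Lemma tail_cover Y S0 s N e : is_cover Y S0 -> lcseries (len S0) s -> lcpos e ->
  exists s', cover_sums (Y `|` (Cn N `&` ~` Cinf)) s' /\ lcle s' (s + (m N - l) + e).
Proof.
move=> hS0 hs0 ep.
pose Z K := ~` Cn (N + K).+1 `&` Cn (N + K).
pose del K := m (N + K) - m (N + K).+1.
have hZ K := om_approx (mdiff (leqnSn (N + K))) (shift_pos K.+1 ep).
pose SK K := projT1 (cid (hZ K)).
have hSK K : exists s1, is_cover (Z K) (SK K) /\ lcseries (len (SK K)) s1 /\
    lcle s1 (del K + shift K.+1 e) := projT2 (cid (hZ K)).
pose F K' := if K' is K.+1 then SK K else S0.
pose X K' := if K' is K.+1 then Z K else Y.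
pose beta K' := if K' is K.+1 then del K + shift K.+1 e else s.
have hF K' : is_cover (X K') (F K').
  by case: K' => [|K] //=; have [s1 [h _]] := hSK K.
have hb K' n : lcle (lcpsum (len (F K')) n) (beta K').
  case: K' => [|K] /=; first exact: series_le (fun k => len_nonneg k hS0) hs0 n.
  have [s1 [h1 [h2 h3]]] := hSK K.
  exact: lcle_trans (series_le (fun k => len_nonneg k h1) h2 n) h3.
have hbs q : exists K0, forall K, (K0 <= K)%N -> small q (beta K).
  move: hconv; rewrite conv_small => hc.
  have [N1 hN1] := hc q; have [K2 hK2] := shift_small ep q.
  exists (maxn N1 K2).+1 => -[|K] //= hK.
  apply: smallD; last by apply: hK2; lia.
  have -> : del K = (m (N + K) - l) - (m (N + K).+1 - l).
    by rewrite /del opprB addrA subrK.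
  by apply: smallB; apply: hN1; lia.
have hbb D : lcle (\sum_(K < D) beta K) (s + (m N - l) + e).
  case: D => [|D].
    rewrite big_ord0 le0E; apply: nonneg_add; last by right.
    apply: nonneg_add; first exact: cover_sum_nonneg (cover_sums_of hS0 hs0).
    by rewrite -le0E -lcle_sub; exact: l_le.
  rewrite big_ord_recl /=.
  have -> : \sum_(i < D) beta (lift ord0 i) =
      \sum_(K < D) del K + \sum_(K < D) shift K.+1 e.
    by rewrite -big_split.
  rewrite telescope; apply: (lcle_comb (l_le (N + D)) (sum_shift_le D ep)).
  by apply: lc_eq => t; rewrite !(coefB, coefD); ring.
have [s' [hs' hle]] := merge_cover hF hb hbs hbb.
exists s'; split => //; apply: (cover_sums_sub _ hs').
move=> x [xY|[xN xC]]; first by exists 0%N.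
have [K [h1 h2]] := notC_ex xN xC.
by exists K.+1.
Qed.

Lemma main_B B b : outer_measure B b ->
  exists L E, outer_measure (Cinf `&` B) L /\ outer_measure (~` Cinf `&` B) E /\ b = L + E.
Proof.
move=> hB.
have hsp N : exists p, outer_measure (Cn N `&` B) p /\ outer_measure (~` Cn N `&` B) (b - p).
  have [p [r [hp [hr e]]]] := meas_split (Cmeas N) hB.
  exists p; split => //.
  by have -> : b - p = r by rewrite e; apply: lc_eq => t; rewrite !(coefB, coefD); ring.
have [c hc] := choice hsp.
have cbound N K : (N <= K)%N -> nonneg (c N - c K) /\ lcle (c N - c K) (m N - m K).
  move=> NK; have [p [r [hp [hr e]]]] := meas_split (Cmeas K) (hc N).1.
  have eK : Cn K `&` (Cn N `&` B) = Cn K `&` B.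
    by rewrite setIA; congr (_ `&` _); apply/setIidPl; exact: Cn_sub.
  rewrite eK in hp; rewrite (om_unique hp (hc K).1) in e.
  have -> : c N - c K = r by rewrite e; apply: lc_eq => t; rewrite !(coefB, coefD); ring.
  split; first exact: om_nonneg hr.
  apply: (om_mono _ hr (mdiff NK)) => x [h1 [h2 _]]; by split.
have cstab : stab c.
  move=> q; move: hconv; rewrite conv_small => hc2.
  have [N0 hN0] := hc2 q; exists N0 => n hn.
  have [h1 h2] := cbound N0 n hn.
  have hs : small q (m N0 - m n).
    have -> : m N0 - m n = (m N0 - l) - (m n - l).
      by apply: lc_eq => t; rewrite !(coefB, coefD); ring.
    by apply: smallB; apply: hN0.
  by rewrite -opprB; apply: smallN; exact: small_le h1 h2 hs.
have [L hL] := complete cstab.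
have hE : lcconverges (fun N => b - c N) (b - L).
  by apply: lim_add; [exact: lim_const|exact: lim_opp].
have hml : lcconverges (fun N => m N - l) 0.
  rewrite -(subrr l); apply: lim_add => //; exact: lim_const.
exists L, (b - L); split; last split; last by rewrite addrC subrK.
- split.
  + move=> s [S0 [hS0 hs0]]; apply: eps1 => e ep.
    apply: (@lim_le _ c (fun N => s + (m N - l) + e)) => //; last first.
      have -> : s + e = s + 0 + e by rewrite addr0.
      apply: lim_add; last exact: lim_const.
      by apply: lim_add => //; exact: lim_const.
    exists 0%N => N _.
    have [s' [hs' hle]] := tail_cover N hS0 hs0 ep.
    apply: lcle_trans hle; apply: (om_le_sum (hc N).1).
    apply: (cover_sums_sub _ hs') => x [xN xB].
    case: (pselect (Cinf x)) => xC; first by left.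
    by right.
  + move=> m' hm'; apply: (@lim_le _ (fun _ => m') c) => //; last exact: lim_const.
    exists 0%N => N _; apply: (om_lb (hc N).1) => s hs; apply: hm'.
    apply: (cover_sums_sub _ hs) => x [xC xB]; split => //; exact: Cinf_sub xC.
- split.
  + move=> s hs; apply: (@lim_le _ (fun N => b - c N) (fun _ => s)) => //; last exact: lim_const.
    exists 0%N => N _; apply: (om_le_sum (hc N).2); apply: (cover_sums_sub _ hs).
    by move=> x [xC xB]; split => // xN; apply: xC; apply: Cinf_sub xN.
  + move=> m' hm'; apply: eps2 => e ep.
    apply: (@lim_le _ (fun _ => m') (fun N => (b - c N + e) + (m N - l) + e)) => //.
    * exists 0%N => N _.
      have [S1 [s1 [hS1 [hs1 le1]]]] := om_approx (hc N).2 ep.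
      have [s' [hs' hle]] := tail_cover N hS1 hs1 ep.
      have h1 : lcle m' s'.
        apply: hm'; apply: (cover_sums_sub _ hs') => x [xC xB].
        case: (pselect (Cn N x)) => xN; last by left.
        by right.
      apply: (lcle_trans h1); apply: (lcle_trans hle).
      by apply: lcle_add2r; apply: lcle_add2r.
    * exact: lim_const.
    * have -> : b - L + e + e = (b - L + e) + 0 + e by rewrite addr0.
      apply: lim_add; last exact: lim_const.
      apply: lim_add => //; apply: lim_add => //; exact: lim_const.
Qed.

End Main.

Theorem mainTheorem20 (R : realType) (A : nat -> set (LC R)) :
  (forall n, L_measurable (A n)) ->
  (exists (m : nat -> LC R) (l : LC R),
      (forall N : nat, outer_measure (\bigcap_(n in `I_N.+1) A n) (m N)) /\
      lcconverges m l) ->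
  L_measurable (\bigcap_n A n).
Proof.
move=> hA [m [l [hm hconv]]].
have hB := main_B hA hm hconv.
split.
  have [L [E [hL _]]] := hB _ _ (hm 0%N).
  exists L; move: hL.
  have -> : (\bigcap_n A n) `&` (\bigcap_(n in `I_1) A n) = \bigcap_n A n.
    by apply/setIidPl => x h n _; exact: h.
  by [].
move=> B [b hb']; have [L [E [h1 [h2 e]]]] := hB _ _ hb'.
split; first by exists L.
split; first by exists E.
move=> mB m1 m2 H1 H2 H3.
by rewrite (om_unique H1 hb') (om_unique H2 h1) (om_unique H3 h2) e.
Qed.
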